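(* Let $q\ge2$ be an even integer. For integers $1\le c_1,c_2,c_3,c_4\le q/2$, define $$f(c_1,c_2,c_3,c_4)=\delta_{c_1,c_2}\delta_{c_3,c_4}-\#\big\{\,|q+1-2|x||\ :\ x\in\{c_1+c_2,\ c_3+c_4,\ c_1-c_2,\ c_3-c_4\}\big\}.$$ Then $f$ is invariant under every permutation of its four arguments.
   Context: $\#S$ denotes the cardinality of a set $S$, and $\delta$ is the Kronecker delta. *)

(* Defs.v *)
From mathcomp Require Import all_boot all_order all_algebra all_fingroup.
Set Implicit Arguments. Unset Strict Implicit. Unset Printing Implicit Defensive.
Import Order.TTheory GRing.Theory Num.Theory.
Local Open Scope ring_scope.

Definition gq (q : nat) (x : int) : int := `|(q%:Z + 1 - 2 * `|x|)|.

Definition fq (q : nat) (c1 c2 c3 c4 : int) : int :=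
  ((c1 == c2) && (c3 == c4))%:Z
  - (size (undup [:: gq q (c1 + c2); gq q (c3 + c4);
                     gq q (c1 - c2); gq q (c3 - c4)]))%:Z.

(* Main.v *)
Require Import Defs.
From mathcomp Require Import all_boot all_order all_algebra all_fingroup.
From mathcomp Require Import zify ring.
Import Order.TTheory GRing.Theory Num.Theory.
Local Open Scope ring_scope.

Definition P (N z : int) : bool := (z == 0) || (`|z| == N).

Lemma Pperm N u v : u = v \/ u = - v -> P N u = P N v.
Proof. by case=> ->; rewrite // /P oppr_eq0 normrN. Qed.

Definition Zc8 (N a b c d : int) : int :=
  (P N (a + b + c + d))%:Z + (P N (a + b - c - d))%:Z + (P N (a - b + c - d))%:Z
  + (P N (a - b - c + d))%:Z + (P N (a + b + c - d))%:Z + (P N (a + b - c + d))%:Z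
  + (P N (a - b + c + d))%:Z + (P N (a - b - c - d))%:Z.

Lemma sw01 N a b c d : Zc8 N b a c d = Zc8 N a b c d.
Proof.
  rewrite /Zc8.
  rewrite (@Pperm N (b + a + c + d) (a + b + c + d)); last by left; ring.
  rewrite (@Pperm N (b + a - c - d) (a + b - c - d)); last by left; ring.
  rewrite (@Pperm N (b - a + c - d) (a - b - c + d)); last by right; ring.
  rewrite (@Pperm N (b - a - c + d) (a - b + c - d)); last by right; ring.
  rewrite (@Pperm N (b + a + c - d) (a + b + c - d)); last by left; ring.
  rewrite (@Pperm N (b + a - c + d) (a + b - c + d)); last by left; ring.
  rewrite (@Pperm N (b - a + c + d) (a - b - c - d)); last by right; ring.
  rewrite (@Pperm N (b - a - c - d) (a - b + c + d)); last by right; ring.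
  lia.
Qed.

Lemma sw12 N a b c d : Zc8 N a c b d = Zc8 N a b c d.
Proof.
  rewrite /Zc8.
  rewrite (@Pperm N (a + c + b + d) (a + b + c + d)); last by left; ring.
  rewrite (@Pperm N (a + c - b - d) (a - b + c - d)); last by left; ring.
  rewrite (@Pperm N (a - c + b - d) (a + b - c - d)); last by left; ring.
  rewrite (@Pperm N (a - c - b + d) (a - b - c + d)); last by left; ring.
  rewrite (@Pperm N (a + c + b - d) (a + b + c - d)); last by left; ring.
  rewrite (@Pperm N (a + c - b + d) (a - b + c + d)); last by left; ring.
  rewrite (@Pperm N (a - c + b + d) (a + b - c + d)); last by left; ring.
  rewrite (@Pperm N (a - c - b - d) (a - b - c - d)); last by left; ring.
  lia.
Qed.

Lemma sw23 N a b c d : Zc8 N a b d c = Zc8 N a b c d.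
Proof.
  rewrite /Zc8.
  rewrite (@Pperm N (a + b + d + c) (a + b + c + d)); last by left; ring.
  rewrite (@Pperm N (a + b - d - c) (a + b - c - d)); last by left; ring.
  rewrite (@Pperm N (a - b + d - c) (a - b - c + d)); last by left; ring.
  rewrite (@Pperm N (a - b - d + c) (a - b + c - d)); last by left; ring.
  rewrite (@Pperm N (a + b + d - c) (a + b - c + d)); last by left; ring.
  rewrite (@Pperm N (a + b - d + c) (a + b + c - d)); last by left; ring.
  rewrite (@Pperm N (a - b + d + c) (a - b + c + d)); last by left; ring.
  rewrite (@Pperm N (a - b - d - c) (a - b - c - d)); last by left; ring.
  lia.
Qed.

Lemma gq_eq {q m : nat} (hq : q = (m * 2)%N) {x y u v : int} :
  `|x| <= 2 * m%:Z -> `|y| <= 2 * m%:Z -> u = x + y -> v = x - y ->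
  (gq q x == gq q y) = P (q%:Z + 1) u || P (q%:Z + 1) v.
Proof. move=> hx hy -> ->; rewrite /gq /P; subst q; lia. Qed.

Lemma undup4 (x1 x2 x3 x4 : int) : x1 != x3 -> x2 != x4 ->
  (size (undup [:: x1; x2; x3; x4]))%:Z
  = 4 - (x1 == x2)%:Z - (x3 == x4)%:Z - (x1 == x4)%:Z - (x3 == x2)%:Z.
Proof.
move=> h13 h24; rewrite /= !inE.
by do ![case: ifP => /=]; lia.
Qed.

Lemma core (q m : nat) (hq : q = (m * 2)%N) (a b c d : int) :
  1 <= a <= m%:Z -> 1 <= b <= m%:Z -> 1 <= c <= m%:Z -> 1 <= d <= m%:Z ->
  fq q a b c d = Zc8 (q%:Z + 1) a b c d - 4.
Proof.
move=> ha hb hc hd; rewrite /fq.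
have bnd : forall x y : int, 1 <= x <= m%:Z -> 1 <= y <= m%:Z ->
   `|x + y| <= 2 * m%:Z /\ `|x - y| <= 2 * m%:Z by move=> x y; lia.
have [b1 b2] := bnd _ _ ha hb.
have [b3 b4] := bnd _ _ hc hd.
have n13 : gq q (a + b) != gq q (a - b).
  rewrite (gq_eq hq b1 b2 (erefl _) (erefl _)) /P; subst q; lia.
have n24 : gq q (c + d) != gq q (c - d).
  rewrite (gq_eq hq b3 b4 (erefl _) (erefl _)) /P; subst q; lia.
rewrite undup4 //.
have t1 : ~~ ((gq q (a+b) == gq q (c+d)) && (gq q (a+b) == gq q (c-d))) by move: n13 n24; lia.
have t2 : ~~ ((gq q (a+b) == gq q (c+d)) && (gq q (a-b) == gq q (c+d))) by move: n13 n24; lia.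
have t3 : ~~ ((gq q (a-b) == gq q (c-d)) && (gq q (a+b) == gq q (c-d))) by move: n13 n24; lia.
have t4 : ~~ ((gq q (a-b) == gq q (c-d)) && (gq q (a-b) == gq q (c+d))) by move: n13 n24; lia.
move: t1 t2 t3 t4.
rewrite (gq_eq (u := a + b + c + d) (v := a + b - c - d) hq b1 b3); try ring.
rewrite (gq_eq (u := a - b + c - d) (v := a - b - c + d) hq b2 b4); try ring.
rewrite (gq_eq (u := a + b + c - d) (v := a + b - c + d) hq b1 b4); try ring.
rewrite (gq_eq (u := a - b + c + d) (v := a - b - c - d) hq b2 b3); try ring.
have e1 : ~~ (P (q%:Z + 1) (a + b + c + d) && P (q%:Z + 1) (a + b - c - d)) by rewrite /P; subst q; lia.
have e2 : ~~ (P (q%:Z + 1) (a + b + c - d) && P (q%:Z + 1) (a + b - c + d)) by rewrite /P; subst q; lia.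
have e3 : ~~ (P (q%:Z + 1) (a - b + c + d) && P (q%:Z + 1) (a - b - c - d)) by rewrite /P; subst q; lia.
have e4 : (P (q%:Z + 1) (a - b + c - d) && P (q%:Z + 1) (a - b - c + d)) = (a == b) && (c == d)
  by rewrite /P; subst q; lia.
move=> t1 t2 t3 t4.
rewrite /Zc8.
move: e1 e2 e3 e4 t1 t2 t3 t4.
lia.
Qed.
Ltac chain n := lazymatch goal with
  | |- ?x = ?x => reflexivity
  | _ => match n with S ?k => first
      [ refine (eq_trans (sw01 _ _ _ _ _) _); chain k
      | refine (eq_trans (sw12 _ _ _ _ _) _); chain k
      | refine (eq_trans (sw23 _ _ _ _ _) _); chain k ] end end.

Lemma ord4 (i : 'I_4) : i = inord 0 \/ i = inord 1 \/ i = inord 2 \/ i = inord 3.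
Proof.
case: i => [[|[|[|[|k]]]] Hk].
- by left; apply/val_inj; rewrite /= inordK.
- by right; left; apply/val_inj; rewrite /= inordK.
- by right; right; left; apply/val_inj; rewrite /= inordK.
- by right; right; right; apply/val_inj; rewrite /= inordK.
- by [].
Qed.

Theorem corollary4p4 (q : nat) (hq2 : (2 <= q)%N) (hqe : ~~ odd q)
  (c : 'I_4 -> int)
  (hc : forall i : 'I_4, 1 <= c i <= (q./2)%:Z)
  (s : {perm 'I_4}) :
  fq q (c (s (inord 0))) (c (s (inord 1))) (c (s (inord 2))) (c (s (inord 3)))
  = fq q (c (inord 0)) (c (inord 1)) (c (inord 2)) (c (inord 3)).
Proof.
have hq : q = (q./2 * 2)%N by rewrite muln2 -[LHS]odd_double_half (negbTE hqe).
rewrite (@core q (q./2) hq _ _ _ _ (hc _) (hc _) (hc _) (hc _)) (@core q (q./2) hq _ _ _ _ (hc _) (hc _) (hc _) (hc _)).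
congr (_ - _).
have D : [&& s (inord 0) != s (inord 1), s (inord 0) != s (inord 2), s (inord 0) != s (inord 3),
   s (inord 1) != s (inord 2), s (inord 1) != s (inord 3) & s (inord 2) != s (inord 3)].
  by rewrite !(inj_eq perm_inj) -!(inj_eq val_inj) /= !inordK.
move: D.
case: (ord4 (s (inord 0))) => [E0|[E0|[E0|E0]]];
case: (ord4 (s (inord 1))) => [E1|[E1|[E1|E1]]];
case: (ord4 (s (inord 2))) => [E2|[E2|[E2|E2]]];
case: (ord4 (s (inord 3))) => [E3|[E3|[E3|E3]]];
rewrite E0 E1 E2 E3 ?eqxx ?andbF //= => _.
all: chain 6%N.
Qed.
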